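(* Let $v\ge 2$, $l\ge 1$ and $t\ge 1$ be integers, put $n=vl$, and assume $n>2t-2$. Let $B$ be the set of sequences $\sigma\in\mathbb{Z}_v^n$ (indexed $0,\dots,n-1$) in which every symbol occurs exactly $l$ times, and choose $\sigma\in B$ uniformly at random. For $z\in\mathbb{Z}_v^t$ let $\lambda(z)=\#\{i\in\{0,\dots,n-1\}:\ \sigma((i+\iota)\,\%\,n)=z(\iota)\ \forall\,0\le\iota<t\}$. If $(z(i),\dots,z(t-1))\neq(z(0),\dots,z(t-1-i))$ for all $1\le i<t$, then $$\mathrm{VAR}(\lambda(z))=\frac{\prod_{a=0}^{v-1}(l)_{|z|_a}}{(n-1)_{t-1}}-\left(\frac{\prod_{a=0}^{v-1}(l)_{|z|_a}}{(n-1)_{t-1}}\right)^2+\frac{\prod_{a=0}^{v-1}(l)_{2|z|_a}}{(n-1)_{2t-2}}.$$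
   Context: $x\,\%\,n$ is the least nonnegative remainder modulo $n$. $(x)_m=x(x-1)\cdots(x-m+1)$ is the falling factorial. For $a\in\mathbb{Z}_v$, $|z|_a$ is the number of entries of $z$ equal to $a$. *)

(* Defs.v *)
From mathcomp Require Import all_boot all_order all_algebra.
Set Implicit Arguments. Unset Strict Implicit. Unset Printing Implicit Defensive.
Import GRing.Theory Num.Theory.
Local Open Scope ring_scope.

Definition cyc (n : nat) (i : 'I_n) (k : nat) : 'I_n :=
  Ordinal (ltn_pmod (i + k) (leq_ltn_trans (leq0n i) (ltn_ord i))).

Definition Bset (n v l : nat) : {set {ffun 'I_n -> 'I_v}} :=
  [set s : {ffun 'I_n -> 'I_v} | [forall a : 'I_v, #|[set i : 'I_n | s i == a]| == l]].

Definition lam (n v t : nat) (z : 'I_t -> 'I_v) (s : {ffun 'I_n -> 'I_v}) : nat :=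
  #|[set i : 'I_n | [forall k : 'I_t, s (cyc i k) == z k]]|.

Definition cnt (v t : nat) (z : 'I_t -> 'I_v) (a : 'I_v) : nat :=
  #|[set k : 'I_t | z k == a]|.

Arguments Bset n v l : clear implicits.

Definition Exp (n v l : nat) (f : {ffun 'I_n -> 'I_v} -> rat) : rat :=
  (\sum_(s in Bset n v l) f s) / (#|Bset n v l|)%:R.

Arguments Exp n v l f : clear implicits.

Definition Var (n v l : nat) (f : {ffun 'I_n -> 'I_v} -> rat) : rat :=
  Exp n v l (fun s => f s ^+ 2) - (Exp n v l f) ^+ 2.

Arguments Var n v l f : clear implicits.

Definition zseq (v t : nat) (z : 'I_t -> 'I_v) : seq 'I_v := [seq z k | k <- enum 'I_t].

(* Main.v *)
Require Import Defs.
From mathcomp Require Import all_boot all_order all_algebra.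
From mathcomp Require Import all_fingroup all_solvable.
From mathcomp Require Import zify ring.
Import GRing.Theory Num.Theory.
Set Implicit Arguments. Unset Strict Implicit. Unset Printing Implicit Defensive.


Lemma perm_ext (T : finType) (ps qs : seq T) :
  uniq ps -> uniq qs -> size ps = size qs -> exists p : {perm T}, map p ps = qs.
Proof.
move=> ups uqs sz.
have hk : size ps <= #|T| by rewrite -(card_uniqP ups) max_card.
have tr := ntransitive_weak hk (Sym_trans T).
have tq : size qs == size ps by rewrite sz.
pose tp := in_tuple ps.
pose tq' := Tuple tq.
have dp : tp \in (size ps).-dtuple(setT) by rewrite inE ups; apply/subsetP.
have dq : tq' \in (size ps).-dtuple(setT) by rewrite inE uqs; apply/subsetP.
have [a _ ha] := atransP2 tr dp dq.
exists a.
have := congr1 val ha => /= ->.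
by apply: eq_map => x.
Qed.


Definition Ns n v l (ps : seq 'I_n) (ys : seq 'I_v) :=
  #|[set s in Bset n v l | map s ps == ys]|.

Lemma inB n v l (s : {ffun 'I_n -> 'I_v}) :
  (s \in Bset n v l) = [forall a : 'I_v, #|[set i : 'I_n | s i == a]| == l].
Proof. by rewrite inE. Qed.

Lemma Ns_le n v l (ps qs : seq 'I_n) (ys : seq 'I_v) : uniq ps -> uniq qs -> size ps = size qs ->
  Ns l ps ys <= Ns l qs ys.
Proof.
move=> ups uqs sz; have [p hp] := perm_ext ups uqs sz.
pose g (s : {ffun 'I_n -> 'I_v}) : {ffun 'I_n -> 'I_v} := [ffun x => s ((p^-1)%g x)].
have ginj : injective g.
  move=> s1 s2 h; apply/ffunP => x; have := congr1 (fun f : {ffun 'I_n -> 'I_v} => f (p x)) h.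
  by rewrite /g !ffunE permK.
rewrite /Ns -(card_imset _ ginj); apply: subset_leq_card.
apply/subsetP => _ /imsetP[s + ->]; rewrite !inE => /andP[hB hm].
apply/andP; split.
  apply/forallP => a; move/forallP: hB => /(_ a) /eqP <-.
  have -> : [set i | g s i == a] = p @: [set i | s i == a].
    apply/setP => x; rewrite inE /g ffunE.
    apply/idP/imsetP => [h|[y]]; first by exists ((p^-1)%g x); rewrite ?inE ?permKV.
    by rewrite inE => h ->; rewrite permK.
  by rewrite card_imset //; apply: perm_inj.
rewrite -hp -map_comp; apply/eqP; rewrite -(eqP hm); apply: eq_map => x.
by rewrite /g /= ffunE permK.
Qed.

Lemma Ns_sym n v l (ps qs : seq 'I_n) (ys : seq 'I_v) : uniq ps -> uniq qs -> size ps = size qs ->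
  Ns l ps ys = Ns l qs ys.
Proof. by move=> u1 u2 s; apply/eqP; rewrite eqn_leq !Ns_le. Qed.


Lemma card_setP (T : finType) (A : {set T}) (P : pred T) :
  #|[set s in A | P s]| = \sum_(s in A) (P s : nat).
Proof.
rewrite -sum1_card big_mkcond [RHS]big_mkcond /=; apply: eq_bigr => s _.
by rewrite inE; case: (s \in A); case: (P s).
Qed.

Lemma sum_count (T : eqType) (r : seq T) (P : pred T) :
  \sum_(i <- r) (P i : nat) = count P r.
Proof. by elim: r => [|x r IH]; rewrite ?big_nil ?big_cons ?IH. Qed.

Lemma fiber_out n v l (s : {ffun 'I_n -> 'I_v}) (ps : seq 'I_n) (ys : seq 'I_v) b :
  s \in Bset n v l -> uniq ps -> map s ps = ys ->
  \sum_(j | j \notin ps) (s j == b : nat) = l - count_mem b ys.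
Proof.
move=> hB ups hm.
have hl : \sum_j (s j == b : nat) = l.
  move: hB; rewrite inE => /forallP /(_ b) /eqP <-.
  rewrite -sum1_card [RHS]big_mkcond /=; apply: eq_bigr => x _.
  by rewrite inE; case: (s x == b).
rewrite -hl [in RHS](bigID (fun j => j \in ps)) /=.

have -> : \sum_(i | i \in ps) (s i == b : nat) = \sum_(i <- ps) (s i == b : nat).
  by rewrite (big_uniq _ ups).
rewrite sum_count -hm count_map.
by rewrite addKn.
Qed.

Lemma Ns_step n v l (ps : seq 'I_n) (ys : seq 'I_v) i b :
  uniq (rcons ps i) -> size ps = size ys ->
  Ns l (rcons ps i) (rcons ys b) * (n - size ps) = (l - count_mem b ys) * Ns l ps ys.
Proof.
move=> u sz; have ups : uniq ps by move: u; rewrite rcons_uniq => /andP[].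
have hc : #|[predC ps]| = n - size ps.
  have h1 := cardC (mem ps); rewrite card_ord (card_uniqP ups) in h1.
  by rewrite -[X in _ = X - _]h1 addKn.
have -> : Ns l (rcons ps i) (rcons ys b) * (n - size ps)
   = \sum_(j | j \notin ps) Ns l (rcons ps j) (rcons ys b).
  rewrite -hc mulnC -sum_nat_const; apply: eq_big => // j hj.
  apply: Ns_sym; rewrite ?size_rcons //.
  by rewrite rcons_uniq ups andbT.
rewrite /Ns.
under eq_bigr do rewrite card_setP.
rewrite exchange_big /= card_setP big_distrr /=; apply: eq_bigr => s hB.
under eq_bigr do rewrite map_rcons eqseq_rcons.
case: eqP => hm /=.
  by rewrite muln1 (fiber_out b hB ups hm).
by rewrite muln0 big1.
Qed.


Lemma Ns_count n v l (ps : seq 'I_n) (ys : seq 'I_v) : uniq ps -> size ps = size ys ->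
  Ns l ps ys * n ^_ (size ps) = #|Bset n v l| * \prod_(a < v) l ^_ (count_mem a ys).
Proof.
elim/last_ind: ps ys => [|ps i IH] ys.
  case: ys => // _ _; rewrite /Ns big1 // muln1 ffactn0 muln1.
  by apply: eq_card => s; rewrite !inE andbT.
case/lastP: ys => [|ys b]; first by rewrite size_rcons.
rewrite !size_rcons => u [sz].
have ups : uniq ps by move: u; rewrite rcons_uniq => /andP[].
rewrite ffactnSr mulnA (mulnC _ (n ^_ _)) -mulnA (Ns_step l b u sz).
rewrite (mulnC (l - _)) mulnA (mulnC _ (Ns _ _ _)) (IH ys ups sz) -mulnA; congr (_ * _).
rewrite (bigD1 b) //= [in RHS](bigD1 b) //= -cats1 count_cat /= eqxx addn1 ffactnSr.
rewrite mulnAC; congr (_ * _).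
apply: eq_bigr => a hab; rewrite count_cat /=.
by rewrite eq_sym (negbTE hab) !addn0.
Qed.


Lemma cycE n (i : 'I_n) k : val (cyc i k) = (i + k) %% n.
Proof. by []. Qed.

Lemma cyc_cyc n (i : 'I_n) d k : cyc (cyc i d) k = cyc i (d + k).
Proof. by apply: val_inj; rewrite !cycE modnDml addnA. Qed.

Lemma cyc0 n (i : 'I_n) : cyc i 0 = i.
Proof. by apply: val_inj; rewrite cycE addn0 modn_small. Qed.

Lemma cyc_inj n (i : 'I_n) k k' : k < n -> k' < n -> cyc i k = cyc i k' -> k = k'.
Proof.
move=> hk hk' /(congr1 val); rewrite !cycE => /eqP.
by rewrite eqn_modDl !modn_small // => /eqP.
Qed.

Definition win n t (i : 'I_n) : seq 'I_n := map (cyc i) (iota 0 t).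

Lemma uniq_cyc n (i : 'I_n) (L : seq nat) : uniq L -> all (fun x => x < n) L ->
  uniq (map (cyc i) L).
Proof.
move=> u /allP a; rewrite map_inj_in_uniq // => x y hx hy.
by apply: cyc_inj; apply: a.
Qed.

Lemma win_uniq n t (i : 'I_n) : t <= n -> uniq (win t i).
Proof.
move=> htn; apply: uniq_cyc; first exact: iota_uniq.
by apply/allP => x; rewrite mem_iota; lia.
Qed.

Lemma win2_uniq n t (i : 'I_n) d : t <= d -> d + t <= n ->
  uniq (win t i ++ win t (cyc i d)).
Proof.
move=> h1 h2.
have -> : win t i ++ win t (cyc i d) = map (cyc i) (iota 0 t ++ iota d t).
  rewrite map_cat /win; congr (_ ++ _).
  rewrite -{2}(addn0 d) iotaDl -map_comp; apply: eq_map => k /=.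
  by rewrite cyc_cyc.
apply: uniq_cyc.
  rewrite cat_uniq !iota_uniq andbT /=; apply/hasPn => x; rewrite !mem_iota; lia.
by apply/allP => x; rewrite mem_cat !mem_iota; lia.
Qed.

Lemma lamE n v t (z : 'I_t -> 'I_v) (s : {ffun 'I_n -> 'I_v}) :
  lam z s = \sum_(i : 'I_n) (map s (win t i) == zseq z : nat).
Proof.
rewrite /lam -sum1_card big_mkcond /=; apply: eq_bigr => i _; rewrite inE.

have -> : map s (win t i) = map (fun k : 'I_t => s (cyc i k)) (enum 'I_t).
  by rewrite /win -val_enum_ord -!map_comp.
rewrite /zseq; congr nat_of_bool; apply/forallP/eqP => [h|h k].
  by apply/eq_in_map => k _; apply/eqP/h.
by apply/eqP; move/eq_in_map: h; apply; rewrite mem_enum.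
Qed.

Lemma cntE v t (z : 'I_t -> 'I_v) a : cnt z a = count_mem a (zseq z).
Proof.
rewrite /cnt /zseq count_map -sum_count -sum1_card big_mkcond /= -big_enum /=.
by apply: eq_bigr => x _; rewrite inE; case: (z x == a).

Qed.

Lemma size_zseq v t (z : 'I_t -> 'I_v) : size (zseq z) = t.
Proof. by rewrite size_map size_enum_ord. Qed.

Lemma size_win n t (i : 'I_n) : size (win t i) = t.
Proof. by rewrite size_map size_iota. Qed.

Lemma div_lt v l i : 0 < l -> i < v * l -> i %/ l < v.
Proof. by move=> hl hi; rewrite ltn_divLR. Qed.

Lemma B_pos v l : 0 < l -> 0 < #|Bset (v * l) v l|.
Proof.
move=> hl.
pose s0 := [ffun i : 'I_(v * l) => Ordinal (div_lt hl (ltn_ord i))].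
apply/card_gt0P; exists s0; rewrite inE; apply/forallP => a.
have ha : forall r : 'I_l, a * l + r < v * l.
  move=> r; have := ltn_ord a; have := ltn_ord r; nia.
pose f (r : 'I_l) : 'I_(v * l) := Ordinal (ha r).
have finj : injective f.
  by move=> r r' /(congr1 val) /= /eqP; rewrite eqn_add2l => /eqP /val_inj.
have -> : [set i | s0 i == a] = f @: setT.
  apply/setP => i; rewrite inE ffunE; apply/eqP/imsetP => [h|[r _ ->]].
    have hr : i %% l < l by rewrite ltn_mod.
    exists (Ordinal hr) => //; apply: val_inj => /=.
    by rewrite {1}(divn_eq i l) -h.
  by apply: val_inj => /=; rewrite divnMDl // divn_small ?addn0.
by rewrite card_imset // cardsT card_ord.
Qed.


Lemma overlap0 n v t (s : {ffun 'I_n -> 'I_v}) (zs : seq 'I_v) (i : 'I_n) d :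
  0 < d < t -> map s (win t i) = zs -> map s (win t (cyc i d)) = zs ->
  drop d zs = take (t - d) zs.
Proof.
move=> hd h1 h2; have sz : size zs = t by rewrite -h1 size_map size_win.
apply: (@eq_from_nth _ (s i)).
  by rewrite size_drop size_take sz ifT //; lia.
move=> m; rewrite size_drop sz => hm.
rewrite nth_drop nth_take //.
rewrite -{1}h1 -h2 /win -!map_comp !(nth_map 0) ?size_iota; try lia.
rewrite /= !nth_iota; try lia.
by rewrite cyc_cyc !add0n.
Qed.

Lemma cyc_back n (i : 'I_n) d : d <= n -> cyc (cyc i d) (n - d) = i.
Proof.
move=> hd; apply: val_inj; rewrite cyc_cyc cycE.
by rewrite subnKC // modnDr modn_small.
Qed.


Definition M n v l t (zs : seq 'I_v) (i j : 'I_n) :=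
  \sum_(s in Bset n v l) ((map s (win t i) == zs) && (map s (win t j) == zs) : nat).

Lemma zero_term n v l t (zs : seq 'I_v) (i : 'I_n) d :
  (forall d, 0 < d < t -> drop d zs != take (t - d) zs) ->
  0 < d < t -> M l t zs i (cyc i d) = 0.
Proof.
move=> hz hd; apply: big1 => s _.
case: eqP => // e1; case: eqP => // e2.
by have := hz d hd; rewrite (overlap0 hd e1 e2) eqxx.
Qed.

Lemma pair_sum n v l t (zs : seq 'I_v) (i : 'I_n) :
  (forall d, 0 < d < t -> drop d zs != take (t - d) zs) ->
  size zs = t -> 0 < t -> t + t <= n + 1 ->
  \sum_j M l t zs i j = Ns l (win t i) zs
     + \sum_(t <= d < n - t + 1) Ns l (win t i ++ win t (cyc i d)) (zs ++ zs).
Proof.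
move=> hz sz ht htn.
have hinj : injective (fun d : 'I_n => cyc i d).
  by move=> a b /cyc_inj h; apply: val_inj; apply: h.
rewrite (reindex_inj hinj) /= -(big_mkord xpredT (fun d => M l t zs i (cyc i d))).
rewrite (@big_cat_nat _ _ _ 1 0 n) //=; last lia.
rewrite big_nat1 (@big_cat_nat _ _ _ t 1 n) //=; try lia.
rewrite (@big_cat_nat _ _ _ (n - t + 1) t n) //=; try lia.
rewrite [X in _ + (X + _)]big_nat_cond [X in _ + (X + _)]big1; last first.
  by move=> d /andP[hd _]; apply: zero_term.
rewrite [X in _ + (_ + (_ + X))]big_nat_cond [X in _ + (_ + (_ + X))]big1; last first.
  move=> d /andP[hd _]; apply: big1 => s _.
  case: eqP => // e1; case: eqP => // e2.
  have hd' : 0 < n - d < t by lia.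
  have e1' : map s (win t (cyc (cyc i d) (n - d))) = zs by rewrite cyc_back //; lia.
  by have := hz _ hd'; rewrite (overlap0 hd' e2 e1') eqxx.
rewrite add0n addn0; congr (_ + _).
  rewrite /M /Ns cyc0 card_setP; apply: eq_bigr => s _; by rewrite andbb.
apply: eq_bigr => d _; rewrite /M /Ns card_setP; apply: eq_bigr => s _.
by rewrite map_cat eqseq_cat // size_map size_win sz.
Qed.

Lemma mid_count n v l t (zs : seq 'I_v) (i : 'I_n) :
  size zs = t ->
  (\sum_(t <= d < n - t + 1) Ns l (win t i ++ win t (cyc i d)) (zs ++ zs)) * n ^_ (t + t)
  = (n - t + 1 - t) * (#|Bset n v l| * \prod_(a < v) l ^_ (count_mem a (zs ++ zs))).
Proof.
move=> sz; rewrite big_distrl /= -sum_nat_const_nat big_nat_cond [RHS]big_nat_cond.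
apply: eq_bigr => d /andP[/andP[h1 h2] _].
have -> : t + t = size (win t i ++ win t (cyc i d)) by rewrite size_cat !size_win.
apply: Ns_count; first by apply: win2_uniq; lia.
by rewrite !size_cat !size_win sz.
Qed.


Lemma sum_cnt v (s : seq 'I_v) : \sum_(a < v) count_mem a s = size s.
Proof.
elim: s => [|x s IH] /=; first by rewrite big1.
rewrite big_split /= IH (bigD1 x) //= eqxx big1 ?addn0 ?add1n // => a /negbTE.
by rewrite eq_sym => ->.
Qed.

Lemma Q0 v l t (z : 'I_t -> 'I_v) : v * l < t + t ->
  \prod_(a < v) l ^_ (2 * cnt z a) = 0.
Proof.
move=> h.
case: (boolP [exists a, l < 2 * cnt z a]) => [/existsP[a ha]|/existsPn H].
  by rewrite (bigD1 a) //= ffact_small ?mul0n.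
exfalso.
have : \sum_(a < v) 2 * cnt z a <= \sum_(a < v) l.
  by apply: leq_sum => a _; have := H a; rewrite -leqNgt.
rewrite -big_distrr /= sum_nat_const card_ord.
under eq_bigr do rewrite cntE.
rewrite sum_cnt size_zseq; lia.
Qed.

Local Open Scope ring_scope.

Lemma final_rat (n t S1 Xs Bc P Q : nat) :
  (0 < Bc)%N -> (1 <= t)%N -> (t + t <= n + 1)%N ->
  (S1 * n ^_ t = n * (Bc * P))%N ->
  (Xs * n ^_ (t + t) = n * ((n - t + 1 - t) * (Bc * Q)))%N ->
  ((n < t + t)%N -> Xs = 0%N /\ Q = 0%N) ->
  (S1 + Xs)%:R / Bc%:R - (S1%:R / Bc%:R) ^+ 2
  = P%:R / ((n.-1) ^_ t.-1)%:R - (P%:R / ((n.-1) ^_ t.-1)%:R) ^+ 2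
    + Q%:R / ((n.-1) ^_ (2 * t - 2))%:R :> rat.
Proof.
move=> hB ht htn e1 e2 e3.
case: n htn e1 e2 e3 => [|n'] htn e1 e2 e3; first lia.
case: t ht htn e1 e2 e3 => [|t'] ht htn e1 e2 e3; first lia.
rewrite /= in e1 e2 e3 *.
have hF1 : (0 < n' ^_ t')%N by rewrite ffact_gt0; lia.
have hE1 : S1%:R / Bc%:R = P%:R / (n' ^_ t')%:R :> rat.
  rewrite ffactSS mulnCA in e1.
  have e1' : (S1 * n' ^_ t' = Bc * P)%N by apply/eqP; rewrite -(eqn_pmul2l (ltn0Sn n')) e1.
  apply/eqP; rewrite eqr_div ?pnatr_eq0 -?lt0n // -!natrM e1' mulnC //.
have hX : Xs%:R / Bc%:R = Q%:R / (n' ^_ (2 * t'.+1 - 2))%:R :> rat.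
  case: (ltnP n'.+1 (t'.+1 + t'.+1)) => hc.
    by case: (e3 hc) => -> ->; rewrite !mul0r.
  have htt : (t'.+1 + t'.+1 = (2 * t'.+1 - 2).+2)%N by lia.
  rewrite htt ffactSS ffactnSr in e2.
  have hm : (0 < n' - (2 * t'.+1 - 2))%N by lia.
  have hF2 : (0 < n' ^_ (2 * t'.+1 - 2))%N by rewrite ffact_gt0; lia.
  have hmm : (n'.+1 - t'.+1 + 1 - t'.+1 = n' - (2 * t'.+1 - 2))%N by lia.
  rewrite hmm in e2.
  have e2' : (Xs * n' ^_ (2 * t'.+1 - 2) = Bc * Q)%N.
    apply/eqP; rewrite -(eqn_pmul2l (ltn0Sn n')) -(eqn_pmul2r hm).
    apply/eqP; set F := (n' ^_ _)%N in e2 *; set m := (n' - _)%N in e2 *.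
    transitivity (Xs * (n'.+1 * (F * m)))%N; first ring.
    rewrite e2; ring.
  apply/eqP; rewrite eqr_div ?pnatr_eq0 -?lt0n // -!natrM e2' mulnC //.
rewrite natrD mulrDl hE1 hX; ring.
Qed.


Unset Implicit Arguments.
Theorem corollary4 (v l t : nat) (z : 'I_t -> 'I_v) :
  (2 <= v)%N -> (1 <= l)%N -> (1 <= t)%N -> (2 * t - 2 < v * l)%N ->
  (forall i : nat, (1 <= i < t)%N -> drop i (zseq z) != take (t - i) (zseq z)) ->
  let n := (v * l)%N in
  let P := (\prod_(a < v) l ^_ (cnt z a))%N in
  let Q := (\prod_(a < v) l ^_ (2 * cnt z a))%N in
  Var n v l (fun s => (lam z s)%:R)
  = P%:R / ((n.-1) ^_ t.-1)%:R - (P%:R / ((n.-1) ^_ t.-1)%:R) ^+ 2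
    + Q%:R / ((n.-1) ^_ (2 * t - 2))%:R.
Proof.
move=> hv hl ht htn hz n P Q.
have hn : n = (v * l)%N by [].
set zs := zseq z.
have szs : size zs = t := size_zseq z.
have hz' : forall d, (0 < d < t)%N -> drop d zs != take (t - d) zs by move=> d; apply: hz.
have htn' : (t <= n)%N by lia.
have ht2 : (t + t <= n + 1)%N by lia.
set Bc := #|Bset n v l|.
have hB : (0 < Bc)%N by apply: B_pos.
have N3 : forall i : 'I_n, (Ns l (win t i) zs * n ^_ t = Bc * P)%N.
  move=> i; have := Ns_count l (win_uniq i htn') (_ : size (win t i) = size zs).
  rewrite size_win => -> //; congr (_ * _); apply: eq_bigr => a _; by rewrite cntE.
pose X (i : 'I_n) := (\sum_(t <= d < n - t + 1) Ns l (win t i ++ win t (cyc i d)) (zs ++ zs))%N.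
have N4 : forall i : 'I_n, (X i * n ^_ (t + t) = (n - t + 1 - t) * (Bc * Q))%N.
  move=> i; rewrite /X mid_count //; congr (_ * (_ * _)); apply: eq_bigr => a _.
  by rewrite count_cat addnn -mul2n cntE.
have E1 : (\sum_(s in Bset n v l) lam z s = \sum_(i : 'I_n) Ns l (win t i) zs)%N.
  under eq_bigr do rewrite lamE.
  rewrite exchange_big; apply: eq_bigr => i _; by rewrite /Ns card_setP.
have E2 : (\sum_(s in Bset n v l) lam z s ^ 2 = \sum_(i : 'I_n) \sum_(j : 'I_n) M l t zs i j)%N.
  under eq_bigr do rewrite lamE expnS expn1 big_distrl /=.
  rewrite exchange_big; apply: eq_bigr => i _.
  under eq_bigr do rewrite big_distrr /=.
  rewrite exchange_big; apply: eq_bigr => j _; apply: eq_bigr => s _.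
  by rewrite mulnb.
set S1 := (\sum_(s in Bset n v l) lam z s)%N.
set S2 := (\sum_(s in Bset n v l) lam z s ^ 2)%N.
set Xs := (\sum_(i : 'I_n) X i)%N.
have hS2 : S2 = (S1 + Xs)%N.
  rewrite /S2 E2 /S1 E1 /Xs -big_split /=; apply: eq_bigr => i _.
  by rewrite pair_sum //; lia.
have e1 : (S1 * n ^_ t = n * (Bc * P))%N.
  rewrite /S1 E1 big_distrl /=; under eq_bigr do rewrite N3.
  by rewrite sum_nat_const card_ord.
have e2 : (Xs * n ^_ (t + t) = n * ((n - t + 1 - t) * (Bc * Q)))%N.
  rewrite /Xs big_distrl /=; under eq_bigr do rewrite N4.
  by rewrite sum_nat_const card_ord.
have e3 : (n < t + t)%N -> Xs = 0%N /\ Q = 0%N.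
  move=> hc; split; last by apply: Q0; lia.
  by rewrite /Xs big1 // => i _; rewrite /X big_geq //; lia.
rewrite /Var /Exp /=.
have -> : \sum_(s in Bset n v l) (lam z s)%:R ^+ 2 = S2%:R :> rat.
  by rewrite /S2 natr_sum; apply: eq_bigr => s _; rewrite natrX.
have -> : \sum_(s in Bset n v l) (lam z s)%:R = S1%:R :> rat by rewrite /S1 natr_sum.
rewrite hS2; exact: final_rat.
Qed.
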